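(* Let $n$ DMUs, indexed by $J$, each use $m$ inputs (indexed by $I$) and produce $s$ outputs (indexed by $R$), with $n\ge2(m+s)$ and all data $x_{ij}>0$, $y_{rj}>0$. Let $o$ be a DMU that is efficient in the PT model (PT efficiency equal to $1$). For a goal price $\tau_o>0$, the TVG (primal) program of the sPT model is $$\Delta_o^{sPT}=\max_{v_o,u_o}\ -\sum_{i}v_{io}x_{io}+\sum_r u_{ro}y_{ro}$$ subject to $-\sum_i v_{io}x_{ij}+\sum_r u_{ro}y_{rj}\le0$ for all $j\in J\setminus\{o\}$, $x_{io}v_{io}\ge\tau_o$ ($i\in I$), $y_{ro}u_{ro}\ge\tau_o$ ($r\in R$), with $v_o\ge0$ and $u_o$ free. Let $(v_o^\#,u_o^\#)$ be optimal for $\tau_o=1$ (Step I), $\bar t=1/\sum_r u^\#_{ro}y_{ro}$, and $(v_o^\star,u_o^\star)=\bar t(v_o^\#,u_o^\#)$ (Step II). With $\alpha_o^\star=\sum_i v^\star_{io}x_{io}$ and $\beta_o^\star=\sum_r u^\star_{ro}y_{ro}$, the super-pure-technical efficiency $E_o^{sPT\star}=\beta_o^\star/\alpha_o^\star$ satisfies $E_o^{sPT\star}\ge1$.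
   Context: The PT model for DMU-$o$ is the linear program $\min\sum_i v_{io}x_{io}-\sum_r u_{ro}y_{ro}$ s.t. $\sum_i v_{io}x_{ij}-\sum_r u_{ro}y_{rj}\ge0$ ($j\in J$), $x_{io}v_{io}\ge\tau_o$, $y_{ro}u_{ro}\ge\tau_o$, $v_o,u_o$ free; its efficiency is $\sum_r u^\star_{ro}y_{ro}/\sum_i v^\star_{io}x_{io}$ at an optimal solution. The TAP (dual) program of the sPT model is $\min\sum_iQ_{io}\tau_o+\sum_rP_{ro}\tau_o$ s.t. $-\sum_{j\ne o}x_{ij}\pi_{jo}+Q_{io}x_{io}\ge-x_{io}$, $\sum_{j\ne o}y_{rj}\pi_{jo}+P_{ro}y_{ro}=y_{ro}$, $\pi_o,Q_o,P_o\ge0$. *)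

(* Defs.v *)
From mathcomp Require Import all_boot all_order all_algebra.
Set Implicit Arguments. Unset Strict Implicit. Unset Printing Implicit Defensive.
Import Order.TTheory GRing.Theory Num.Theory.
Local Open Scope ring_scope.

Section DEA.
Variables (R : realFieldType) (m s n : nat).
Variables (x : 'I_m -> 'I_n -> R) (y : 'I_s -> 'I_n -> R) (o : 'I_n).

Definition vx (v : 'I_m -> R) (j : 'I_n) : R := \sum_(i < m) v i * x i j.
Definition uy (u : 'I_s -> R) (j : 'I_n) : R := \sum_(r < s) u r * y r j.

Definition PT_feasible (tau : R) (v : 'I_m -> R) (u : 'I_s -> R) : Prop :=
  (forall j : 'I_n, vx v j - uy u j >= 0) /\
  (forall i : 'I_m, x i o * v i >= tau) /\
  (forall r : 'I_s, y r o * u r >= tau).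

Definition PT_obj (v : 'I_m -> R) (u : 'I_s -> R) : R := vx v o - uy u o.

Definition PT_optimal (tau : R) v u : Prop :=
  PT_feasible tau v u /\
  forall v' u', PT_feasible tau v' u' -> PT_obj v u <= PT_obj v' u'.

Definition PT_efficiency (v : 'I_m -> R) (u : 'I_s -> R) : R := uy u o / vx v o.

Definition PT_efficient : Prop :=
  exists tau : R, 0 < tau /\
    exists v u, PT_optimal tau v u /\ PT_efficiency v u = 1.

Definition TVG_feasible (tau : R) (v : 'I_m -> R) (u : 'I_s -> R) : Prop :=
  (forall j : 'I_n, j != o -> - vx v j + uy u j <= 0) /\
  (forall i : 'I_m, x i o * v i >= tau) /\
  (forall r : 'I_s, y r o * u r >= tau) /\
  (forall i : 'I_m, 0 <= v i).

Definition TVG_obj (v : 'I_m -> R) (u : 'I_s -> R) : R := - vx v o + uy u o.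

Definition TVG_optimal (tau : R) v u : Prop :=
  TVG_feasible tau v u /\
  forall v' u', TVG_feasible tau v' u' -> TVG_obj v' u' <= TVG_obj v u.

End DEA.

(* Main.v *)
Require Import Defs.
From mathcomp Require Import all_boot all_order all_algebra.
Import Order.TTheory GRing.Theory Num.Theory.
Local Open Scope ring_scope.

Lemma sum_pos (R : realFieldType) k (f : 'I_k -> R) :
  (0 < k)%N -> (forall i, 0 < f i) -> 0 < \sum_(i < k) f i.
Proof.
case: k f => // k f _ H; rewrite big_ord_recl.
apply: ltr_pwDl; first exact: H.
by apply: sumr_ge0 => i _; apply: ltW.
Qed.

Lemma vx_scale (R : realFieldType) m n (x : 'I_m -> 'I_n -> R) c v j :
  vx x (fun i => c * v i) j = c * vx x v j.
Proof. by rewrite /vx mulr_sumr; apply: eq_bigr => i _; rewrite mulrA. Qed.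

Lemma uy_scale (R : realFieldType) s n (y : 'I_s -> 'I_n -> R) c u j :
  uy y (fun i => c * u i) j = c * uy y u j.
Proof. by rewrite /uy mulr_sumr; apply: eq_bigr => i _; rewrite mulrA. Qed.

Theorem theorem6 (R : realFieldType) (m s n : nat)
    (x : 'I_m -> 'I_n -> R) (y : 'I_s -> 'I_n -> R) (o : 'I_n)
    (hm : (0 < m)%N) (hs : (0 < s)%N) (hn : (2 * (m + s) <= n)%N)
    (hx : forall i j, 0 < x i j) (hy : forall r j, 0 < y r j)
    (heff : PT_efficient x y o)
    (vs : 'I_m -> R) (us : 'I_s -> R)
    (hopt : TVG_optimal x y o 1 vs us) :
  let tbar := (uy y us o)^-1 in
  let vstar := fun i => tbar * vs i in
  let ustar := fun r => tbar * us r in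
  let alpha := vx x vstar o in
  let beta := uy y ustar o in
  1 <= beta / alpha.
Proof.
cbv zeta.
case: hopt => [[_ [hv1 [hu1 _]]] hmax].
have vpos : forall i, 0 < vs i.
  move=> i; have := hv1 i; rewrite -(pmulr_rgt0 _ (hx i o)) => h.
  by apply: lt_le_trans h.
have upos : forall r, 0 < us r.
  move=> r; have := hu1 r; rewrite -(pmulr_rgt0 _ (hy r o)) => h.
  by apply: lt_le_trans h.
have VX : 0 < vx x vs o by apply: sum_pos => // i; rewrite mulr_gt0.
have UY : 0 < uy y us o by apply: sum_pos => // r; rewrite mulr_gt0.
case: heff => tau [tau0 [v [u [[[hf [hvt hut]] _] heq]]]].
have vp : forall i, 0 < v i.
  move=> i; have := hvt i => h.
  have : 0 < x i o * v i by apply: lt_le_trans h.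
  by rewrite pmulr_rgt0.
have VX2 : 0 < vx x v o by apply: sum_pos => // i; rewrite mulr_gt0.
have equ : uy y u o = vx x v o.
  by rewrite -[uy y u o](divfK (lt0r_neq0 VX2)); move: heq; rewrite /PT_efficiency => ->; rewrite mul1r.
set c := tau^-1.
have c0 : 0 < c by rewrite invr_gt0.
have feas : TVG_feasible x y o 1 (fun i => c * v i) (fun r => c * u r).
  split; [|split; [|split]].
  - move=> j _; rewrite vx_scale uy_scale -mulrN -mulrDr.
    rewrite pmulr_rle0 // addrC subr_le0 -subr_ge0; exact: hf.
  - move=> i; rewrite mulrCA -(mulVf (lt0r_neq0 tau0)) ler_pM2l //; exact: hvt.
  - move=> r; rewrite mulrCA -(mulVf (lt0r_neq0 tau0)) ler_pM2l //; exact: hut.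
  - by move=> i; apply: ltW; rewrite mulr_gt0.
have := hmax _ _ feas.
rewrite /TVG_obj vx_scale uy_scale equ addNr => h0.
have tb0 : 0 < (uy y us o)^-1 by rewrite invr_gt0.
rewrite vx_scale uy_scale.
rewrite ler_pdivlMr ?mul1r; last by rewrite mulr_gt0.
by rewrite ler_pM2l // -subr_ge0 addrC.
Qed.
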